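(* For every infinite cardinal $\lambda$, there is no Hausdorff $d$-feebly compact topological semigroup $S$ containing a dense subsemigroup isomorphic to the semigroup of $\lambda\times\lambda$-matrix units $B_\lambda$.
   Context: For a non-zero cardinal $\lambda$, $B_\lambda=(\lambda\times\lambda)\cup\{0\}$ with multiplication $(a,b)\cdot(c,d)=(a,d)$ if $b=c$, $(a,b)\cdot(c,d)=0$ if $b\neq c$, and $(a,b)\cdot0=0\cdot(a,b)=0\cdot0=0$. A topological semigroup is a topological space with a jointly continuous associative operation. A space is $d$-feebly compact if every discrete family of its open subsets is finite. *)

(* Defs.v *)
From HB Require Import structures.
From mathcomp Require Import all_boot all_order.
From mathcomp Require Import all_classical topology.
Set Implicit Arguments. Unset Strict Implicit. Unset Printing Implicit Defensive.
Local Open Scope classical_set_scope.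

(* The semigroup of L x L matrix units B_L = (L x L) u {0};
   [None] is the zero element, [Some (a,b)] is the pair (a,b). *)
Definition Bl (L : Type) := option (L * L).

Definition Bmul (L : Type) (x y : Bl L) : Bl L :=
  match x, y with
  | Some (a, b), Some (c, d) => if asbool (b = c) then Some (a, d) else None
  | _, _ => None
  end.

Definition discrete_family (S : topologicalType) (F : set (set S)) : Prop :=
  forall x : S, exists U : set S, nbhs x U /\
    forall A B : set S, F A -> F B -> U `&` A !=set0 -> U `&` B !=set0 -> A = B.

Definition d_feebly_compact (S : topologicalType) : Prop :=
  forall F : set (set S), (forall A, F A -> open A) -> discrete_family F ->
    finite_set F.

Definition topological_semigroup (S : topologicalType) (mul : S -> S -> S) : Prop :=
  associative mul /\ continuous (fun p : S * S => mul p.1 p.2).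

(* Main.v *)
Require Import Defs.
From HB Require Import structures.
From mathcomp Require Import all_boot all_order.
From mathcomp Require Import all_classical topology.
Local Open Scope classical_set_scope.

Lemma joint (S : topologicalType) (mul : S -> S -> S) :
  continuous (fun p : S * S => mul p.1 p.2) ->
  forall x y (A : set S), nbhs (mul x y) A ->
  exists U V, [/\ nbhs x U, nbhs y V & forall u v, U u -> V v -> A (mul u v)].
Proof.
move=> hc x y A hA.
have := hc (x, y) A hA.
move=> [[U V] /= [hU hV] hUV].
exists U, V; split => // u v Uu Vv.
exact: (hUV (u, v)).
Qed.
Arguments joint {S mul} _ {x y A}.

Lemma accum (S : topologicalType) (L : Type) (h : L -> S) :
  d_feebly_compact S -> injective h -> (forall b, nbhs (h b) [set h b]) ->
  forall R : set L, infinite_set R ->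
  exists z : S, forall U : set S, nbhs z U -> exists b b',
    [/\ R b, R b', b <> b', U (h b) & U (h b')].
Proof.
move=> hd hinj hiso R hR.
pose g := fun b => [set h b].
have ginj : injective g.
  move=> b b' e; apply: hinj.
  have : g b (h b) by [].
  by rewrite e.
have Fopen : forall A, (g @` R) A -> open A.
  move=> _ [b _ <-]; rewrite openE => y ->; exact: hiso.
have : ~ discrete_family (g @` R).
  move=> hdisc; apply: hR.
  have fin := hd _ Fopen hdisc.
  apply: (sub_finite_set _ (finite_preimage _ fin)).
  - by move=> b Rb; exists b.
  - by move=> x y _ _; exact: ginj.
move=> /existsNP [z hz]; exists z => U hU.
apply: contrapT => hno; apply: hz.
exists U; split => // A B [b Rb <-] [b' Rb' <-] [x [Ux hbx]] [y [Uy hby]].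
apply: contrapT => neq; apply: hno; exists b, b'; split => //.
- by move=> eb; apply: neq; rewrite eb.
- by rewrite -hbx.
- by rewrite -hby.
Qed.
Arguments accum {S L h}.

Lemma acc_plus (S : topologicalType) (L : Type) (h : L -> S) :
  hausdorff_space S -> injective h -> (forall b, nbhs (h b) [set h b]) ->
  forall (R : set L) (z : S),
  (forall U : set S, nbhs z U -> exists b b',
    [/\ R b, R b', b <> b', U (h b) & U (h b')]) ->
  forall (U : set S) (D : set L), nbhs z U -> finite_set D ->
  exists b, [/\ R b, ~ D b & U (h b)].
Proof.
move=> hS hinj hiso R z hz U D hU hD.
have cl : closed (h @` D).
  exact: ((accessible_finite_set_closed).1 (hausdorff_accessible hS) _ (finite_image _ hD)).
have nz : ~ (h @` D) z.
  move=> [k _ hk].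
  have := hiso k; rewrite hk => /hz; rewrite -hk => -[b [b' [_ _ nb hb hb']]].
  by apply: nb; apply: hinj; rewrite hb hb'.
have hn : nbhs z (U `&` ~` (h @` D)).
  apply: filterI => //; apply: open_nbhs_nbhs; split => //; exact: closed_openC.
have [b [_ [Rb _ _ [Ub nDb] _]]] := hz _ hn.
by exists b; split => // Db; apply: nDb; exists b.
Qed.
Arguments acc_plus {S L h}.

Lemma Bmul_match (L : Type) (a b c : L) : Bmul (Some (a,b)) (Some (b,c)) = Some (a,c).
Proof. by rewrite /= asboolT. Qed.

Lemma Bmul_nomatch (L : Type) (a b c d : L) : b <> c -> Bmul (Some (a,b)) (Some (c,d)) = None.
Proof. by move=> h; rewrite /= asboolF. Qed.

Lemma iso (L : Type) (S : topologicalType) (mul : S -> S -> S) (f : Bl L -> S) :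
  continuous (fun p : S * S => mul p.1 p.2) -> hausdorff_space S -> injective f ->
  (forall x y, f (Bmul x y) = mul (f x) (f y)) -> closure (range f) = [set: S] ->
  forall p, nbhs (f (Some p)) [set f (Some p)].
Proof.
move=> hc hS finj fhom fd [a b].
have T1 : forall y : S, closed [set y] := accessible_closed_set1 (hausdorff_accessible hS).
have hx : mul (mul (f (Some (a,a))) (f (Some (a,b)))) (f (Some (b,b))) = f (Some (a,b)).
  by rewrite -!fhom !Bmul_match.
have hO : nbhs (mul (mul (f (Some (a,a))) (f (Some (a,b)))) (f (Some (b,b)))) (~` [set f None]).
  apply: open_nbhs_nbhs; split; first exact: closed_openC.
  by rewrite hx => /finj.
have [U1 [V1 [hU1 hV1 h1]]] := joint hc hO.
have [U2 [V2 [hU2 hV2 h2]]] := joint hc hU1.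
have key : forall v, V2 v -> mul (mul (f (Some (a,a))) v) (f (Some (b,b))) <> f None.
  move=> v Vv; apply: h1; last exact: nbhs_singleton.
  by apply: h2 => //; exact: nbhs_singleton.
have : [set A | exists2 B, open_nbhs (f (Some (a,b))) B & B `<=` A] V2 by rewrite -nbhsE.
move=> -[V3 [oV3 V3x] V32].
suff sub : V3 `<=` [set f (Some (a,b))].
  by apply: (filterS sub); apply: open_nbhs_nbhs; split.
move=> y V3y; apply: contrapT => nyx.
have : closure (range f) y by rewrite fd.
move=> /(_ (V3 `&` ~` [set f (Some (a,b))])).
case.
  apply: open_nbhs_nbhs; split; last by split.
  by apply: openI => //; exact: closed_openC.
move=> _ [[w _ <-] [V3w nwx]].
apply: (key _ (V32 _ V3w)).
rewrite -!fhom.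
case: w V3w nwx => [[c d]|] V3w nwx //=.
case: asboolP => [ac|nac] //=.
case: asboolP => [db|ndb] //=.
by exfalso; apply: nwx; rewrite -ac db.
Qed.
Arguments iso {L S mul f}.

Lemma inf_ne (T : Type) (A : set T) : infinite_set A -> exists x, A x.
Proof.
move=> hA; apply: contrapT => hn; apply: hA.
suff -> : A = set0 by exact: finite_set0.
by apply/seteqP; split => // x Ax; apply: hn; exists x.
Qed.
Arguments inf_ne {T A}.

Theorem corollary12 (L : Type) (L_infinite : infinite_set [set: L])
    (S : topologicalType) (mul : S -> S -> S) :
  topological_semigroup mul -> hausdorff_space S -> d_feebly_compact S ->
  ~ exists f : Bl L -> S,
      injective f /\
      (forall x y : Bl L, f (Bmul x y) = mul (f x) (f y)) /\
      closure (range f) = [set: S].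
Proof.
move=> [_ hc] hS hd [f [finj [fhom fd]]].
have hiso := iso hc hS finj fhom fd.
have [a _] := inf_ne L_infinite.
have T1 : forall y : S, closed [set y] := accessible_closed_set1 (hausdorff_accessible hS).
have Sinj : forall g : L -> L * L, injective g -> injective (fun b => f (Some (g b))).
  by move=> g gi b b' /finj [] /gi.
have hisoG : forall (g : L -> L * L) b,
    nbhs (f (Some (g b))) [set f (Some (g b))] by move=> g b; exact: hiso.
have diag : forall M, nbhs (f None) M -> finite_set [set b | ~ M (f (Some (b,b)))].
  move=> M hM; apply: contrapT => hinf.
  have dinj : injective (fun b : L => (b,b)) by move=> ? ? [].
  have [z hz] := accum hd (Sinj _ dinj) (hisoG _) _ hinf.
  suff zz0 : z = f None.
    by rewrite zz0 in hz; have [b [_ [Rb _ _ Mb _]]] := hz M hM; exact: Rb Mb.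
  have e1 : mul z z = z.
    apply: (hS) => A B hA hB.
    have [U [V [hU hV hUV]]] := joint hc hA.
    have [b [_ [_ _ _ [[Ub Vb] Bb] _]]] := hz _ (filterI (filterI hU hV) hB).
    exists (f (Some (b,b))); split => //.
    by have := hUV _ _ Ub Vb; rewrite -fhom Bmul_match.
  have e2 : mul z z = f None.
    apply: (hS) => A B hA hB.
    have [U [V [hU hV hUV]]] := joint hc hA.
    have [b [b' [_ _ nb [Ub Vb] [Ub' Vb']]]] := hz _ (filterI hU hV).
    exists (f None); split; last exact: nbhs_singleton.
    by have := hUV _ _ Ub Vb'; rewrite -fhom Bmul_nomatch.
  by rewrite -[LHS]e1.
have row : forall M, nbhs (f None) M -> finite_set [set b | ~ M (f (Some (a,b)))].
  move=> M hM; apply: contrapT => hinf.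
  have rinj : injective (fun b : L => (a,b)) by move=> ? ? [].
  have [z hz] := accum hd (Sinj _ rinj) (hisoG _) _ hinf.
  suff zz0 : z = f None.
    by rewrite zz0 in hz; have [b [_ [Rb _ _ Mb _]]] := hz M hM; exact: Rb Mb.
  have e1 : mul z (f None) = f None.
    apply: (hS) => A B hA hB.
    have [U [V [hU hV hUV]]] := joint hc hA.
    have [b [_ [_ _ _ Ub _]]] := hz _ hU.
    exists (f None); split; last exact: nbhs_singleton.
    by have := hUV _ _ Ub (nbhs_singleton hV); rewrite -fhom.
  have e2 : mul z (f None) = z.
    apply: (hS) => A B hA hB.
    have [U [V [hU hV hUV]]] := joint hc hA.
    have [b [_ Db [Ub Bb]]] := acc_plus hS (Sinj _ rinj) (hisoG _) _ _ hz _ _ (filterI hU hB) (diag _ hV).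
    have Vb : V (f (Some (b,b))) by apply: contrapT.
    exists (f (Some (a,b))); split => //.
    by have := hUV _ _ Ub Vb; rewrite -fhom Bmul_match.
  by rewrite -[LHS]e2.
have col : forall M, nbhs (f None) M -> finite_set [set b | ~ M (f (Some (b,a)))].
  move=> M hM; apply: contrapT => hinf.
  have cinj : injective (fun b : L => (b,a)) by move=> ? ? [].
  have [z hz] := accum hd (Sinj _ cinj) (hisoG _) _ hinf.
  suff zz0 : z = f None.
    by rewrite zz0 in hz; have [b [_ [Rb _ _ Mb _]]] := hz M hM; exact: Rb Mb.
  have e1 : mul (f None) z = f None.
    apply: (hS) => A B hA hB.
    have [U [V [hU hV hUV]]] := joint hc hA.
    have [b [_ [_ _ _ Vb _]]] := hz _ hV.
    exists (f None); split; last exact: nbhs_singleton.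
    by have := hUV _ _ (nbhs_singleton hU) Vb; rewrite -fhom.
  have e2 : mul (f None) z = z.
    apply: (hS) => A B hA hB.
    have [U [V [hU hV hUV]]] := joint hc hA.
    have [b [_ Db [Vb Bb]]] := acc_plus hS (Sinj _ cinj) (hisoG _) _ _ hz _ _ (filterI hV hB) (diag _ hU).
    have Ub : U (f (Some (b,b))) by apply: contrapT.
    exists (f (Some (b,a))); split => //.
    by have := hUV _ _ Ub Vb; rewrite -fhom Bmul_match.
  by rewrite -[LHS]e2.
have hW : nbhs (mul (f None) (f None)) (~` [set f (Some (a,a))]).
  rewrite -fhom /=; apply: open_nbhs_nbhs; split; first exact: closed_openC.
  by move=> /finj; discriminate.
have [U [V [hU hV hUV]]] := joint hc hW.
have hN : nbhs (f None) (U `&` V) by apply: filterI.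
have fin : finite_set ([set b | ~ (U `&` V) (f (Some (a,b)))] `|`
                       [set b | ~ (U `&` V) (f (Some (b,a)))]).
  by rewrite finite_setU; split; [exact: (row _ hN) | exact: (col _ hN)].
have [b [_ nb]] := inf_ne (infinite_setD L_infinite fin).
have Ur : (U `&` V) (f (Some (a,b))) by apply: contrapT => h; apply: nb; left.
have Uc : (U `&` V) (f (Some (b,a))) by apply: contrapT => h; apply: nb; right.
have := hUV _ _ Ur.1 Uc.2.
by rewrite -fhom Bmul_match; apply.
Qed.
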